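(* Let $M$ be a monoid. Then $\mathbb{X}(M)$ is a strong $M$-partial order.
   Context: A monoid is a semigroup with a two-sided identity $1_M$; by convention, whenever a monoid acts on a set, $1_M$ acts as the identity. An $M$-partial order is a set $X$ with an action of $M$ and a partial order $\leq_X$ such that $x\leq_X y$ implies $ax\leq_X ay$ for all $x,y\in X$, $a\in M$. An $M$-partial order $X$ is strong if for all $y\in X$ and $a\in M$, $\{ax : x\in X,\ x\leq_X y\}=\{x\in X : x\leq_X ay\}$. $\mathbb{X}(M)=\{aM : a\in M\}$ (the set of principal right ideals of $M$), partially ordered by inclusion, with $M$ acting by left multiplication: $b\cdot(aM)=baM$. *)

(* Defs.v *)
From Stdlib Require Import ProofIrrelevance FunctionalExtensionality PropExtensionality.
Set Implicit Arguments.

Definition is_monoid (M : Type) (mul : M -> M -> M) (one : M) : Prop :=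
  (forall a b c, mul a (mul b c) = mul (mul a b) c) /\
  (forall a, mul one a = a) /\ (forall a, mul a one = a).

Definition is_action (M X : Type) (mul : M -> M -> M) (one : M)
  (act : M -> X -> X) : Prop :=
  (forall x, act one x = x) /\
  (forall a b x, act (mul a b) x = act a (act b x)).

Definition is_partial_order (X : Type) (le : X -> X -> Prop) : Prop :=
  (forall x, le x x) /\
  (forall x y, le x y -> le y x -> x = y) /\
  (forall x y z, le x y -> le y z -> le x z).

Definition is_M_partial_order (M X : Type) (mul : M -> M -> M) (one : M)
  (act : M -> X -> X) (le : X -> X -> Prop) : Prop :=
  is_action mul one act /\ is_partial_order le /\
  (forall x y a, le x y -> le (act a x) (act a y)).

Definition is_strong_M_partial_order (M X : Type) (mul : M -> M -> M) (one : M)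
  (act : M -> X -> X) (le : X -> X -> Prop) : Prop :=
  is_M_partial_order mul one act le /\
  (forall (y : X) (a : M),
     (fun z => exists x, le x y /\ z = act a x) = (fun z => le z (act a y))).

Definition rideal (M : Type) (mul : M -> M -> M) (a : M) : M -> Prop :=
  fun z => exists m, z = mul a m.

Definition XM (M : Type) (mul : M -> M -> M) : Type :=
  { S : M -> Prop | exists a, S = rideal mul a }.

Definition XM_le (M : Type) (mul : M -> M -> M) (S T : XM mul) : Prop :=
  forall z, proj1_sig S z -> proj1_sig T z.

Definition XM_act_set (M : Type) (mul : M -> M -> M) (b : M) (S : M -> Prop)
  : M -> Prop := fun w => exists z, S z /\ w = mul b z.

Lemma XM_act_principal (M : Type) (mul : M -> M -> M)
  (assoc : forall a b c, mul a (mul b c) = mul (mul a b) c)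
  (b : M) (S : XM mul) :
  exists a, XM_act_set mul b (proj1_sig S) = rideal mul a.
Proof.
destruct S as [S [a ->]]; simpl; exists (mul b a).
apply functional_extensionality; intro w.
apply propositional_extensionality; unfold XM_act_set, rideal; split.
- intros [z [[m ->] ->]]. exists m. apply assoc.
- intros [m ->]. exists (mul a m). split; [exists m; reflexivity | symmetry; apply assoc].
Qed.

(* The action needs associativity (to know b.(aM) is again principal). *)
Definition XM_act (M : Type) (mul : M -> M -> M) (one : M)
  (Hmon : is_monoid mul one) (b : M) (S : XM mul) : XM mul :=
  exist _ (XM_act_set mul b (proj1_sig S))
    (@XM_act_principal M mul (proj1 Hmon) b S).

(* Main.v *)
Require Import Defs.
From Stdlib Require Import ProofIrrelevance FunctionalExtensionality PropExtensionality.

Lemma XM_eq (M : Type) (mul : M -> M -> M) (S T : XM mul) :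
  proj1_sig S = proj1_sig T -> S = T.
Proof.
destruct S as [S HS], T as [T HT]; simpl; intros ->.
f_equal; apply proof_irrelevance.
Qed.

Lemma set_ext (M : Type) (P Q : M -> Prop) : (forall z, P z <-> Q z) -> P = Q.
Proof.
intro H; apply functional_extensionality; intro z; apply propositional_extensionality; auto.
Qed.

Theorem lemma2p1 (M : Type) (mul : M -> M -> M) (one : M)
  (Hmon : is_monoid mul one) :
  is_strong_M_partial_order mul one (@XM_act M mul one Hmon) (@XM_le M mul).
Proof.
destruct Hmon as [assoc [idl idr]] eqn:EH.
split; [split; [split|split; [split; [|split]|]]|].
- intro x; apply XM_eq; simpl; apply set_ext; intro w; unfold XM_act_set; split.
  + intros [z [Hz ->]]; rewrite idl; exact Hz.
  + intros Hw; exists w; rewrite idl; auto.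
- intros a b x; apply XM_eq; simpl; apply set_ext; intro w; unfold XM_act_set; split.
  + intros [z [Hz ->]]. exists (mul b z); split; [exists z; auto | apply eq_sym, assoc].
  + intros [z [[u [Hu ->]] ->]]. exists u; split; auto.
- intro x; unfold XM_le; auto.
- intros x y Hxy Hyx; apply XM_eq; apply set_ext; intro z; split; auto.
- intros x y z H1 H2; unfold XM_le in *; auto.
- intros x y a H; unfold XM_le in *; simpl; unfold XM_act_set.
  intros z [u [Hu ->]]; exists u; auto.
- intros y a; apply set_ext; intro z; split.
  + intros [x [Hx ->]]; unfold XM_le in *; simpl; unfold XM_act_set.
    intros w [u [Hu ->]]; exists u; auto.
  + intro Hz.
    destruct y as [Y [b HY]]. destruct z as [Z [c HZ]].
    assert (Zc : Z c) by (rewrite HZ; exists one; auto).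
    destruct (Hz c Zc) as [w [Yw Ec]]; simpl in Yw.
    exists (exist _ (rideal mul w) (ex_intro _ w eq_refl)); split.
    * unfold XM_le; simpl; intros v [n ->].
      rewrite HY in Yw; destruct Yw as [m ->]. rewrite HY; exists (mul m n).
      apply eq_sym, assoc.
    * apply XM_eq; simpl; rewrite HZ; apply set_ext; intro v; unfold XM_act_set, rideal; split.
      -- intros [n ->]. exists (mul w n); split; [exists n; auto|]. rewrite Ec; apply eq_sym, assoc.
      -- intros [u [[n ->] ->]]. exists n. rewrite Ec; apply assoc.
Qed.
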